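(* Let $W,V$ be subspaces of $\mathbb{R}^n$ with $\mathbb{R}^n=W\oplus V^\perp$, and let $\mu$ and $\nu$ be probabilistic frames for $W$ and $V$ respectively. Then $\mu$ and $\nu$ perform probabilistic consistent reconstruction if and only if $\nu$ is an oblique dual probabilistic frame of $\mu$ on $V$.
   Context: $\mathcal{P}_2(W)$ denotes Borel probability measures on $\mathbb{R}^n$ concentrated on $W$ with finite second moment. $\mu\in\mathcal{P}_2(W)$ is a probabilistic frame for $W$ if there exist $0<A\le B<\infty$ with $A\|\mathbf{x}\|^2\le\int_W|\langle\mathbf{x},\mathbf{y}\rangle|^2d\mu(\mathbf{y})\le B\|\mathbf{x}\|^2$ for all $\mathbf{x}\in W$. $\Gamma(\mu,\nu)$ is the set of Borel probability measures on $W\times V$ with marginals $\mu$ and $\nu$. $\boldsymbol{\pi}_{WV^\perp}$ is the oblique projection of $\mathbb{R}^n$ onto $W$ along $V^\perp$. $\nu\in\mathcal{P}_2(V)$ is an oblique dual probabilistic frame of $\mu\in\mathcal{P}_2(W)$ on $V$ if there exists $\gamma\in\Gamma(\mu,\nu)$ with $\boldsymbol{\pi}_{WV^\perp}=\int_{W\times V}\mathbf{x}\mathbf{y}^t\,d\gamma(\mathbf{x},\mathbf{y})$. $\mu$ and $\nu$ perform probabilistic consistent reconstruction if there exists $\gamma\in\Gamma(\mu,\nu)$ such that for every $\mathbf{f}\in\mathbb{R}^n$, $\langle\mathbf{f},\mathbf{z}\rangle=\langle\hat{\mathbf{f}},\mathbf{z}\rangle$ for $\nu$-almost all $\mathbf{z}\in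 V$, where $\hat{\mathbf{f}}=\int_{W\times V}\mathbf{x}\langle\mathbf{y},\mathbf{f}\rangle\,d\gamma(\mathbf{x},\mathbf{y})$. *)

(* Defs.v *)
From HB Require Import structures.
From mathcomp Require Import all_boot all_order all_algebra.
From mathcomp Require Import all_classical all_reals all_analysis.
Set Implicit Arguments. Unset Strict Implicit. Unset Printing Implicit Defensive.
Import Order.TTheory GRing.Theory Num.Theory.
Local Open Scope classical_set_scope.
Local Open Scope ring_scope.

(* Points of R^n are n-tuples of reals, with the product (= Borel) sigma-algebra.
   Subspaces of R^n are given as row spaces of n x n matrices (mxalgebra). *)
Section Frames.
Variables (R : realType) (n : nat).

Definition vec := n.-tuple R.

Definition rv (x : vec) : 'rV[R]_n := \row_i tnth x i.

Definition dotv (x y : vec) : R := \sum_(i < n) tnth x i * tnth y i.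
Definition sqnorm (x : vec) : R := dotv x x.

Definition subsp (W : 'M[R]_n) : set vec := [set x | (rv x <= W)%MS].

Definition perp (V : 'M[R]_n) : 'M[R]_n := kermx V^T.

Definition direct_sum_perp (W V : 'M[R]_n) : Prop :=
  mxdirect (W + perp V)%MS /\ (W + perp V == 1%:M)%MS.

(* oblique projection onto W along V^perp, as a matrix acting on column
   vectors (proj_mx acts on row vectors by right multiplication) *)
Definition obl_proj (W V : 'M[R]_n) : 'M[R]_n := (proj_mx W (perp V))^T.

Definition in_P2 (W : 'M[R]_n) (mu : probability vec R) : Prop :=
  (exists A, measurable A /\ A `<=` subsp W /\ mu A = 1%E) /\
  mu.-integrable setT (fun y => (sqnorm y)%:E).

Definition prob_frame (W : 'M[R]_n) (mu : probability vec R) : Prop :=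
  in_P2 W mu /\
  exists A B : R, 0 < A /\ A <= B /\
    forall x, subsp W x ->
      ((A * sqnorm x)%:E <= \int[mu]_y ((dotv x y) ^+ 2)%:E)%E /\
      (\int[mu]_y ((dotv x y) ^+ 2)%:E <= (B * sqnorm x)%:E)%E.

Definition coupling (mu nu : probability vec R)
  (g : probability (vec * vec)%type R) : Prop :=
  (forall A, measurable A -> g (fst @^-1` A) = mu A) /\
  (forall A, measurable A -> g (snd @^-1` A) = nu A).

Definition oblique_dual (W V : 'M[R]_n) (mu nu : probability vec R) : Prop :=
  exists g : probability (vec * vec)%type R, coupling mu nu g /\
    forall i j : 'I_n,
      Rintegral g setT (fun z => tnth z.1 i * tnth z.2 j) = obl_proj W V i j.

Definition fhat (g : probability (vec * vec)%type R) (f : vec) : vec :=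
  [tuple Rintegral g setT (fun z => tnth z.1 i * dotv z.2 f) | i < n].

Definition consistent_reconstruction (mu nu : probability vec R) : Prop :=
  exists g : probability (vec * vec)%type R, coupling mu nu g /\
    forall f : vec, {ae nu, forall z, dotv f z = dotv (fhat g f) z}.

End Frames.

(* Main.v *)
Require Import Defs.
From HB Require Import structures.
From mathcomp Require Import all_boot all_order all_algebra.
From mathcomp Require Import all_classical all_reals all_analysis.
From mathcomp Require Import measurable_realfun.
From mathcomp Require Import ring lra.
Set Implicit Arguments. Unset Strict Implicit. Unset Printing Implicit Defensive.
Import Order.TTheory GRing.Theory Num.Theory.
Local Open Scope classical_set_scope.
Local Open Scope ring_scope.

Section Aux.
Variables (R : realType) (n : nat).
Local Notation vec := (vec R n).

Lemma mtnth (i : 'I_n) : measurable_fun setT (fun x : vec => tnth x i).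
Proof. exact: measurable_tnth. Qed.

Lemma mdotv (f : vec) : measurable_fun setT (fun y : vec => dotv f y).
Proof.
apply: measurable_sum => i; apply: measurable_funM => //; exact: mtnth.
Qed.

Lemma msqnorm : measurable_fun setT (fun y : vec => sqnorm y).
Proof.
apply: measurable_sum => i; apply: measurable_funM; exact: mtnth.
Qed.

Lemma mprod (i j : 'I_n) : measurable_fun setT (fun z : vec * vec => tnth z.1 i * tnth z.2 j).
Proof.
apply: measurable_funM.
  exact: (measurableT_comp (mtnth i) measurable_fst).
exact: (measurableT_comp (mtnth j) measurable_snd).
Qed.

End Aux.
Section Int.
Variables (R : realType) (n : nat).
Local Notation vec := (vec R n).
Local Open Scope ereal_scope.

Lemma int_comp d (T : measurableType d) (phi : T -> vec) (mphi : measurable_fun setT phi)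
  (g : {measure set T -> \bar R}) (mu : {measure set vec -> \bar R}) (h : vec -> R) :
  (forall A, measurable A -> g (phi @^-1` A) = mu A) -> measurable_fun setT h ->
  mu.-integrable setT (EFin \o h) -> g.-integrable setT (EFin \o (h \o phi)).
Proof.
move=> gmu mh /integrableP[_ hfin]; apply/integrableP; split.
  apply/measurable_EFinP; exact: measurableT_comp mh mphi.
rewrite (_ : \int[g]_(x in setT) _ = \int[g]_(x in phi @^-1` setT) ((abse \o (EFin \o h)) \o phi) x)//.
pose pm := measure_function_pushforward__canonical__measure_function_Measure g mphi.
rewrite -(@ge0_integral_pushforward _ _ _ _ _ phi mphi g setT)//; last 2 first.
  by apply: measurableT_comp => //; exact/measurable_EFinP.
  by move=> y _; exact: abse_ge0.
rewrite -/(pushforward g phi).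
rewrite (_ : \int[pushforward g phi]_(y in setT) _ = \int[pm]_(y in setT) (abse \o (EFin \o h)) y)//.
rewrite (eq_measure_integral mu)// => A mA _.
exact: gmu.
Qed.

Lemma sq_le_sqnorm (x : vec) i : (tnth x i ^+ 2 <= sqnorm x)%R.
Proof.
rewrite /sqnorm /dotv (bigD1 i)//= expr2 lerDl.
by apply: sumr_ge0 => k _; rewrite -expr2 sqr_ge0.
Qed.

Lemma sqnorm_ge0 (x : vec) : (0 <= sqnorm x)%R.
Proof. by apply: sumr_ge0 => k _; rewrite -expr2 sqr_ge0. Qed.

Lemma int_prod (W V : 'M[R]_n) (mu nu : probability vec R) g :
  coupling mu nu g -> in_P2 W mu -> in_P2 V nu -> forall i j,
  g.-integrable setT (EFin \o (fun z : vec * vec => tnth z.1 i * tnth z.2 j)%R).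
Proof.
move=> [g1 g2] [_ i1] [_ i2] i j.
have I1 := int_comp measurable_fst g1 (@msqnorm R n) i1.
have I2 := int_comp measurable_snd g2 (@msqnorm R n) i2.
apply: le_integrable (integrableD _ I1 I2) => //.
  by apply/measurable_EFinP; exact: mprod.
move=> z _ /=; rewrite lee_fin.
rewrite [X in (_ <= X)%R]ger0_norm; last by rewrite addr_ge0 // sqnorm_ge0.
have h1 := sq_le_sqnorm z.1 i; have h2 := sq_le_sqnorm z.2 j.
apply: (@le_trans _ _ (tnth z.1 i ^+ 2 + tnth z.2 j ^+ 2)%R); last exact: lerD.
rewrite ler_norml; apply/andP; split; nra.
Qed.

End Int.

Section RS.
Context d (T : measurableType d) (R : realType) (m : {measure set T -> \bar R}).

Lemma int_sum I (s : seq I) (f : I -> T -> R) :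
  (forall k, m.-integrable setT (EFin \o f k)) ->
  m.-integrable setT (EFin \o (fun x => \sum_(k <- s) f k x)).
Proof.
move=> H.
have := @integrable_sum _ _ _ m _ measurableT _ s xpredT (fun k x => (f k x)%:E) (fun k _ => H k).
apply: eq_integrable => // x _ /=; by rewrite sumEFin.
Qed.

Lemma Rint_sum I (s : seq I) (f : I -> T -> R) :
  (forall k, m.-integrable setT (EFin \o f k)) ->
  Rintegral m setT (fun x => \sum_(k <- s) f k x) = \sum_(k <- s) Rintegral m setT (f k).
Proof.
move=> H; elim: s => [|a s IH].
  under eq_Rintegral do rewrite big_nil.
  by rewrite big_nil Rintegral_cst// mul0r.
under eq_Rintegral do rewrite big_cons.
rewrite big_cons RintegralD//; first by rewrite IH.
exact: int_sum.
Qed.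

Lemma int_scale (r : R) (f : T -> R) :
  m.-integrable setT (EFin \o f) -> m.-integrable setT (EFin \o (fun x => r * f x)).
Proof.
move=> H; have := integrableZl measurableT r H.
by apply: eq_integrable => // x _.
Qed.

End RS.

Section AE.
Context d (T : measurableType d) (R : realType) (m : {measure set T -> \bar R}).

Lemma Rint_ae0 (h : T -> R) (N : set T) : measurable N -> m N = 0%E ->
  (forall z, ~ N z -> h z = 0) -> measurable_fun setT h -> Rintegral m setT h = 0.
Proof.
move=> mN N0 hN mh; rewrite /Rintegral.
rewrite (@ae_eq_integral _ _ _ m setT (cst 0%E)) //.
- by rewrite integral0.
- exact/measurable_EFinP.
- exists N; split => // z /= H; apply: contrapT => Nz; apply: H => _.
  by rewrite hN.
Qed.

End AE.

Section Mx.
Variables (R : realType) (n : nat).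
Local Notation vec := (vec R n).

Definition Gam (g : probability (vec * vec)%type R) : 'M[R]_n :=
  \matrix_(i, j) Rintegral g setT (fun z : vec * vec => tnth z.1 i * tnth z.2 j).

Definition Hint (g : probability (vec * vec)%type R) := forall i j : 'I_n,
  g.-integrable setT (EFin \o (fun z : vec * vec => tnth z.1 i * tnth z.2 j)).

Lemma rvE (x : vec) i : rv x 0 i = tnth x i.
Proof. by rewrite mxE. Qed.

Lemma fhatE g f : Hint g -> rv (fhat g f) = rv f *m (Gam g)^T.
Proof.
move=> H; apply/rowP => i; rewrite !mxE tnth_mktuple.
rewrite (@eq_Rintegral _ _ _ g setT (fun z : vec * vec => \sum_(j < n) tnth f j * (tnth z.1 i * tnth z.2 j))); last first.
  move=> z _; rewrite /dotv mulr_sumr; apply: eq_bigr => j _; ring.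
rewrite Rint_sum; last by move=> j; apply: int_scale.
apply: eq_bigr => j _; rewrite RintegralZl//; by rewrite !mxE.
Qed.

Lemma fstN_meas (A : set vec) : measurable A ->
  measurable (fst @^-1` (~` A) : set (vec * vec)).
Proof.
move=> mA; rewrite -[X in measurable X]setTI.
exact: measurable_fst _ _ (measurableC mA).
Qed.

Lemma sndN_meas (A : set vec) : measurable A ->
  measurable (snd @^-1` (~` A) : set (vec * vec)).
Proof.
move=> mA; rewrite -[X in measurable X]setTI.
exact: measurable_snd _ _ (measurableC mA).
Qed.

Lemma Gam_sub (W : 'M[R]_n) mu nu g : coupling mu nu g -> in_P2 W mu -> Hint g ->
  ((Gam g)^T <= W)%MS.
Proof.
move=> [g1 _] [[A [mA [AW A1]]] _] H.
rewrite submxE; apply/eqP/matrixP => j k; rewrite !mxE.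
rewrite (eq_bigr (fun i => Rintegral g setT (fun z : vec * vec =>
    cokermx W i k * (tnth z.1 i * tnth z.2 j)))); last first.
  by move=> i _; rewrite !mxE RintegralZl // mulrC.
rewrite -Rint_sum; last by move=> i; apply: int_scale.
apply: (@Rint_ae0 _ _ _ g _ (fst @^-1` (~` A))).
- exact: fstN_meas.
- apply: eq_trans (g1 _ (measurableC mA)) _; by rewrite probability_setC // A1 subee.
- move=> z /= /contrapT /AW; rewrite /subsp /= submxE => /eqP /matrixP /(_ 0 k).
  rewrite !mxE => S.
  rewrite (eq_bigr (fun i => tnth z.2 j * (rv z.1 0 i * cokermx W i k))).
    by rewrite -mulr_sumr S mulr0.
  by move=> i _; rewrite rvE; ring.
- apply: measurable_sum => i; apply: measurable_funM => //; exact: mprod.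
Qed.

Lemma dotv_mx (x y : vec) : dotv x y = (rv x *m (rv y)^T) 0 0.
Proof. by rewrite !mxE; apply: eq_bigr => i _; rewrite !mxE. Qed.

Lemma self_orth0 (v : 'rV[R]_n) : v *m v^T = 0 -> v = 0.
Proof.
move=> /matrixP /(_ 0 0); rewrite !mxE => S.
have S' : \sum_(i < n) v 0 i ^+ 2 = 0.
  by rewrite -[RHS]S; apply: eq_bigr => i _; rewrite mxE expr2.
apply/rowP => i; rewrite mxE.
have := @psumr_eq0P _ _ xpredT (fun i => v 0 i ^+ 2) (fun i _ => sqr_ge0 (v 0 i)) S' i isT.
by move/eqP; rewrite sqrf_eq0 => /eqP.
Qed.

Lemma cap_perp (V : 'M[R]_n) : (V :&: perp V = 0)%MS.
Proof.
apply/eqP/rowV0P => v; rewrite sub_capmx => /andP[/submxP[D ->] /sub_kermxP].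
move=> H; apply: self_orth0.
by rewrite trmx_mul mulmxA H mul0mx.
Qed.

Lemma full_perp (V : 'M[R]_n) : (1%:M <= V + perp V)%MS.
Proof.
rewrite sub1mx /row_full.
have := mxrank_sum_cap V (perp V); rewrite cap_perp mxrank0 addn0 => ->.
rewrite /perp mxrank_ker mxrank_tr subnKC //; exact: rank_leq_col.
Qed.

Lemma perp_orth (V : 'M[R]_n) (u z : vec) : (rv u <= perp V)%MS -> (rv z <= V)%MS ->
  dotv u z = 0.
Proof.
move=> /sub_kermxP H /submxP[D E].
by rewrite dotv_mx E trmx_mul mulmxA H mul0mx mxE.
Qed.

Lemma perp_orth_mx (V : 'M[R]_n) (u r : 'rV[R]_n) : (u <= perp V)%MS -> (r <= V)%MS ->
  u *m r^T = 0.
Proof.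
move=> /sub_kermxP H /submxP[D ->].
by rewrite trmx_mul mulmxA H mul0mx.
Qed.

Lemma sqnorm0 (x : vec) : sqnorm x = 0 -> rv x = 0.
Proof.
move=> H; apply: self_orth0; apply/matrixP => i j.
by rewrite !ord1 -dotv_mx; move: H; rewrite /sqnorm => ->; rewrite mxE.
Qed.

Definition tup (p : 'rV[R]_n) : vec := [tuple p 0 i | i < n].

Lemma rv_tup p : rv (tup p) = p.
Proof. by apply/rowP => i; rewrite !mxE tnth_mktuple. Qed.

Lemma int_ae0 (nu : {measure set vec -> \bar R}) (h : vec -> R) :
  measurable_fun setT h -> {ae nu, forall z, h z = 0} ->
  (\int[nu]_z (h z)%:E = 0)%E.
Proof.
move=> mh H.
rewrite (@ae_eq_integral _ _ _ nu setT (cst 0%E)) //.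
- by rewrite integral0.
- exact/measurable_EFinP.
- by apply: filterS H => z /= ->.
Qed.

Lemma ae_perp (V : 'M[R]_n) (nu : probability vec R) (a b : vec) :
  prob_frame V nu -> {ae nu, forall z, dotv a z = dotv b z} ->
  (rv a - rv b <= perp V)%MS.
Proof.
move=> [[[S [mS [SV S1]]] _] [A0 [B0 [A0pos [_ Fr]]]]] Hae.
set w := rv a - rv b.
set p := w *m proj_mx V (perp V).
have pV : (p <= V)%MS by apply: proj_mx_sub.
have wp : (w - p <= perp V)%MS.
  by apply: proj_mx_compl_sub; apply: submx_trans (full_perp V); exact: submx1.
have aeS : {ae nu, forall z, S z}.
  by exists (~` S); split => //; [exact: measurableC | rewrite probability_setC // S1 subee].
have key : forall z : vec, S z -> dotv a z = dotv b z -> dotv (tup p) z = 0.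
  move=> z /SV zV Eab.
  have E1 : dotv (tup p) z = ((w - (w - p)) *m (rv z)^T) 0 0.
    by rewrite dotv_mx rv_tup opprB addrC subrK.
  rewrite E1 mulmxBl (perp_orth_mx wp zV) subr0 /w mulmxBl mxE -!dotv_mx Eab.
  by rewrite mxE -dotv_mx subrr.
have I0 : (\int[nu]_z ((dotv (tup p) z) ^+ 2)%:E = 0)%E.
  apply: int_ae0.
    by apply: measurable_funX; exact: mdotv.
  by apply: filterS2 Hae aeS => z E Sz; rewrite key // expr0n.
have sV : subsp V (tup p) by rewrite /subsp /= rv_tup.
have := (Fr (tup p) sV).1; rewrite I0 lee_fin => Hle.
have sq0 : sqnorm (tup p) = 0.
  apply/eqP; rewrite eq_le sqnorm_ge0 andbT.
  by rewrite -(pmulr_rle0 _ A0pos).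
have p0 : p = 0 by rewrite -(rv_tup p); exact: sqnorm0.
by move: wp; rewrite p0 subr0.
Qed.



End Mx.

Unset Implicit Arguments.
Theorem theorem4p4 (R : realType) (n : nat) (W V : 'M[R]_n)
  (mu nu : probability (vec R n) R) :
  direct_sum_perp W V ->
  prob_frame W mu -> prob_frame V nu ->
  consistent_reconstruction mu nu <-> oblique_dual W V mu nu.
Proof.
move=> [/mxdirect_addsP dx full] Fmu Fnu.
have full' : forall u : 'rV[R]_n, (u <= W + perp V)%MS.
  by move=> u; apply: submx_trans (submx1 u) _; move/eqmxP: full => [_ ->].
set P := proj_mx W (perp V).
split.
- move=> [g [cpl Hae]]; exists g; split => //.
  have Hg : Hint g by move=> i j; exact: int_prod cpl Fmu.1 Fnu.1 i j.
  suff E : (Gam g)^T = P.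
    by move=> i j; rewrite /obl_proj -/P -E !mxE.
  apply/row_matrixP => k; rewrite !rowE.
  set u := delta_mx 0 k.
  have hW : (u *m (Gam g)^T <= W)%MS.
    by apply: submx_trans (submxMl _ _) (Gam_sub cpl Fmu.1 Hg).
  have hP : (u - u *m (Gam g)^T <= perp V)%MS.
    have := ae_perp Fnu (Hae (tup u)).
    by rewrite fhatE // rv_tup.
  rewrite -[in RHS](subrK (u *m (Gam g)^T) u) mulmxDl.
  by rewrite (proj_mx_0 dx hP) add0r (proj_mx_id dx hW).
- move=> [g [cpl H]]; exists g; split => //.
  have Hg : Hint g by move=> i j; exact: int_prod cpl Fmu.1 Fnu.1 i j.
  have E : (Gam g)^T = P.
    by apply/matrixP => i j; rewrite [LHS]mxE [LHS]mxE H /obl_proj [LHS]mxE.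
  move=> f.
  have hP : (rv f - rv (fhat g f) <= perp V)%MS.
    by rewrite fhatE // E; exact: proj_mx_compl_sub.
  case: Fnu => [[[S [mS [SV S1]]] _] _].
  have aeS : {ae nu, forall z, S z}.
    by exists (~` S); split => //; [exact: measurableC | rewrite probability_setC // S1 subee].
  apply: filterS aeS => z /SV zV.
  apply/eqP; rewrite -subr_eq0; apply/eqP.
  have Ed : forall A B : 'M[R]_(1,1), (A - B) 0 0 = A 0 0 - B 0 0.
    by move=> A B; rewrite !mxE.
  rewrite !dotv_mx -Ed -mulmxBl.
  by move/matrixP: (perp_orth_mx hP zV) => /(_ 0 0) ->; rewrite mxE.
Qed.
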